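(* Under the standing setting and assumptions (A1)–(A3) described in the context, assume $\mathcal A$ is polyhedral. Then $\mathcal R(X)\neq\emptyset$ for every $X\in\mathcal X$.
   Context: Let $\mathcal X$ be a Hausdorff, first countable, locally convex topological vector space over $\mathbb R$ with dual $\mathcal X'$, partially ordered by a partial order $\geq$ with positive cone $\mathcal X_+=\{X\in\mathcal X: X\geq 0\}$. Let $\mathcal M\subset\mathcal X$ be a vector subspace with $1<\dim\mathcal M<\infty$, carrying the relative topology, and let $\pi:\mathcal M\to\mathbb R$ be linear. Standing assumptions: (A1) there is $U\in\mathcal M\cap\mathcal X_+$ with $\pi(U)=1$; (A2) $\mathcal A\subsetneq\mathcal X$ is closed, contains $0$, and satisfies $\mathcal A+\mathcal X_+\subset\mathcal A$; (A3) the map $\rho(X)=\inf\{\pi(Z): Z\in\mathcal M,\ X+Z\in\mathcal A\}$ is finitely valued and continuous on $\mathcal X$. The optimal payoff map is $\mathcal R(X)=\{Z\in\mathcal M: X+Z\in\mathcal A,\ \pi(Z)=\rho(X)\}$. $\mathcal A$ is polyhedral if it is a finite intersection of sets $\{X\in\mathcal X:\varphi(X)\geq\alpha\}$ with $\varphi\in\mathcal X'$, $\alpha\in\mathbb R$. *)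

(* Defs.v *)
From HB Require Import structures.
From mathcomp Require Import all_boot all_order all_algebra.
From mathcomp Require Import all_classical all_reals all_analysis.
Set Implicit Arguments. Unset Strict Implicit. Unset Printing Implicit Defensive.
Import Order.TTheory GRing.Theory Num.Theory numFieldNormedType.Exports.
Local Open Scope classical_set_scope.
Local Open Scope ring_scope.

Definition first_countable (T : topologicalType) : Prop :=
  forall x : T, exists B : nat -> set T,
    (forall n, nbhs x (B n)) /\ (forall U, nbhs x U -> exists n, B n `<=` U).

Definition vector_partial_order (R : realType) (X : lmodType R)
  (ge : X -> X -> Prop) : Prop :=
  [/\ (forall x, ge x x),
      (forall x y, ge x y -> ge y x -> x = y),
      (forall x y z, ge x y -> ge y z -> ge x z),
      (forall x y z, ge x y -> ge (x + z) (y + z)) &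
      (forall (a : R) x y, 0 <= a -> ge x y -> ge (a *: x) (a *: y))].

Definition pos_cone (R : realType) (X : lmodType R) (ge : X -> X -> Prop) : set X :=
  [set x | ge x 0].

Definition vsubspace (R : realType) (X : lmodType R) (M : set X) : Prop :=
  M 0 /\ forall (a : R) x y, M x -> M y -> M (a *: x + y).

Definition has_dim (R : realType) (X : lmodType R) (M : set X) (n : nat) : Prop :=
  exists b : 'I_n -> X,
    (forall c : 'I_n -> R, \sum_(i < n) c i *: b i = 0 -> forall i, c i = 0) /\
    M = [set \sum_(i < n) c i *: b i | c in [set: 'I_n -> R]].

(* pi : M -> R linear (values outside M are irrelevant) *)
Definition linear_on (R : realType) (X : lmodType R) (M : set X) (pi : X -> R) : Prop :=
  forall (a : R) x y, M x -> M y -> pi (a *: x + y) = a * pi x + pi y.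

Definition cont_linear_functional (R : realType) (X : tvsType R) (phi : X -> R) : Prop :=
  (forall (a : R) x y, phi (a *: x + y) = a * phi x + phi y) /\ continuous phi.

Definition polyhedral (R : realType) (X : tvsType R) (A : set X) : Prop :=
  exists (k : nat) (phi : 'I_k -> X -> R) (alpha : 'I_k -> R),
    (forall i, cont_linear_functional (phi i)) /\
    A = \bigcap_(i in [set: 'I_k]) [set x | phi i x >= alpha i].

Definition rho (R : realType) (X : lmodType R) (M A : set X) (pi : X -> R) (x : X)
  : \bar R :=
  ereal_inf [set (pi z)%:E | z in [set z | M z /\ A (x + z)]].

Definition optimal_payoffs (R : realType) (X : lmodType R) (M A : set X)
  (pi : X -> R) (x : X) : set X :=
  [set z | [/\ M z, A (x + z) & (pi z)%:E = rho M A pi x]].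

(* Main.v *)
Require Import Defs.
From HB Require Import structures.
From mathcomp Require Import all_boot all_order all_algebra.
From mathcomp Require Import all_classical all_reals all_analysis.
From mathcomp Require Import ring lra.
Set Implicit Arguments. Unset Strict Implicit.
Import Order.TTheory GRing.Theory Num.Theory numFieldNormedType.Exports.
Local Open Scope classical_set_scope.
Local Open Scope ring_scope.

Definition aff_closed (R : realType) (V : lmodType R) (E : set V) :=
  forall u v (t : R), E u -> E v -> E ((1 - t) *: u + t *: v).
Definition aff_on (R : realType) (V : lmodType R) (E : set V) (f : V -> R) :=
  forall u v (t : R), E u -> E v -> f ((1 - t) *: u + t *: v) = (1 - t) * f u + t * f v.

Lemma split_ord (k : nat) (P : 'I_k.+1 -> Prop) :
  (forall i, P i) <-> ((forall j : 'I_k, P (lift ord_max j)) /\ P ord_max).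
Proof.
split; first by move=> H; split.
by move=> [H1 H2] i; case: (unliftP ord_max i) => [j ->|->].
Qed.

Lemma crossing (R : realType) (V : lmodType R) (E : set V) (G : V -> R) (a : R)
  (w y : V) : E w -> E y -> aff_on E G -> G w < a -> a <= G y ->
  exists t : R, [/\ 0 <= t, t <= 1 & G ((1 - t) *: w + t *: y) = a].
Proof.
move=> Ew Ey HG lt le.
have D0 : 0 < G y - G w by lra.
exists ((a - G w) / (G y - G w)); split.
- by apply: divr_ge0; lra.
- by rewrite ler_pdivrMr //; lra.
- rewrite HG //.
  have -> : (1 - (a - G w) / (G y - G w)) * G w + (a - G w) / (G y - G w) * G y
          = G w + (a - G w) / (G y - G w) * (G y - G w) by ring.
  by rewrite divfK ?gt_eqF //; ring.
Qed.

Lemma lp_attain (R : realType) (V : lmodType R) (k : nat) :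
  forall (E : set V) (f : V -> R) (g : 'I_k -> V -> R) (a : 'I_k -> R),
  aff_closed E -> aff_on E f -> (forall i, aff_on E (g i)) ->
  (exists p, E p /\ forall i, a i <= g i p) ->
  (exists L, forall y, E y -> (forall i, a i <= g i y) -> L <= f y) ->
  exists c, (E c /\ forall i, a i <= g i c) /\
    forall y, E y -> (forall i, a i <= g i y) -> f c <= f y.
Proof.
elim: k => [|k IH] E f g a HE Hf Hg [p [Ep Hp]] [L HL].
  exists p; split; first by split.
  move=> y Ey _; rewrite leNgt; apply/negP => Hlt.
  set d := f p - f y.
  have d0 : 0 < d by rewrite /d; lra.
  set t := (f p - L) / d + 1.
  have Hv : forall i : 'I_0, a i <= g i ((1 - t) *: p + t *: y) by case.
  have := HL ((1 - t) *: p + t *: y) (HE _ _ _ Ep Ey) Hv.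
  rewrite Hf //.
  have -> : (1 - t) * f p + t * f y = f p - ((f p - L) / d) * d - d
    by rewrite /t /d; ring.
  rewrite divfK ?gt_eqF //; lra.
pose g' := fun j : 'I_k => g (lift ord_max j).
pose a' := fun j : 'I_k => a (lift ord_max j).
pose G := g ord_max; pose am := a ord_max.
have inP : forall y, (forall i, a i <= g i y) <-> ((forall j, a' j <= g' j y) /\ am <= G y).
  by move=> y; apply: (split_ord (fun i => a i <= g i y)).
have Hg' : forall j, aff_on E (g' j) by move=> j; apply: Hg.
have HG : aff_on E G by apply: Hg.
have cvx : forall u v (t : R), 0 <= t -> t <= 1 -> E u -> E v ->
    (forall j, a' j <= g' j u) -> (forall j, a' j <= g' j v) ->
    forall j, a' j <= g' j ((1 - t) *: u + t *: v).
  move=> u v t t0 t1 Eu Ev Hu Hv j; rewrite Hg' //.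
  have := Hu j; have := Hv j => h1 h2.
  have : 0 <= (1 - t) * (g' j u - a' j) by apply: mulr_ge0; lra.
  have : 0 <= t * (g' j v - a' j) by apply: mulr_ge0; lra.
  lra.
suff : (exists c, (E c /\ forall i, a i <= g i c) /\
    forall y, E y -> (forall i, a i <= g i y) -> f c <= f y) \/
   exists w, [/\ E w, (forall j, a' j <= g' j w), G w < am &
     forall y, E y -> (forall i, a i <= g i y) -> f w <= f y].
  case=> [//|[w [Ew Hw' Gw Hwmin]]].
  pose E2 := fun v => E v /\ G v = am.
  have HE2 : aff_closed E2.
    move=> u v t [Eu Gu] [Ev Gv]; split; first exact: HE.
    by rewrite HG // Gu Gv; ring.
  have Hp' := (inP p).1 Hp.
  have [t [t0 t1 Gt]] := crossing Ew Ep HG Gw Hp'.2.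
  have [c [[[Ec Gc] Hc] Hcmin]] : exists c, (E2 c /\ forall j, a' j <= g' j c) /\
    forall y, E2 y -> (forall j, a' j <= g' j y) -> f c <= f y.
    apply: IH.
    - exact: HE2.
    - by move=> u v s [Eu _] [Ev _]; apply: Hf.
    - by move=> j u v s [Eu _] [Ev _]; apply: Hg'.
    - exists ((1 - t) *: w + t *: p); split; first by split => //; apply: HE.
      by apply: cvx => //; exact: Hp'.1.
    - exists L => y [Ey Gy] Hy; apply: HL => //; apply/inP; split => //.
      by rewrite Gy.
  exists c; split.
    by split => //; apply/inP; split => //; rewrite Gc.
  move=> y Ey Hy.
  have Hy' := (inP y).1 Hy.
  have [s [s0 s1 Gs]] := crossing Ew Ey HG Gw Hy'.2.
  apply: (@le_trans _ _ (f ((1 - s) *: w + s *: y))).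
    apply: Hcmin; first by split => //; apply: HE.
    by apply: cvx => //; exact: Hy'.1.
  rewrite Hf //.
  have := Hwmin y Ey Hy => h.
  have : 0 <= (1 - s) * (f y - f w) by apply: mulr_ge0; lra.
  lra.
have Hp' := (inP p).1 Hp.
case: (pselect (exists L', forall y, E y -> (forall j, a' j <= g' j y) -> L' <= f y)) => [Hb|Hnb].
  have [c [[Ec Hc] Hcmin]] := IH E f g' a' HE Hf Hg' (ex_intro _ p (conj Ep Hp'.1)) Hb.
  case: (lerP am (G c)) => HGc.
    left; exists c; split; first by split => //; apply/inP.
    by move=> y Ey Hy; apply: Hcmin => //; exact: ((inP y).1 Hy).1.
  right; exists c; split => //.
  by move=> y Ey Hy; apply: Hcmin => //; exact: ((inP y).1 Hy).1.
right.
have [w [Ew [Hw Hlt]]] : exists w, E w /\ (forall j, a' j <= g' j w) /\ f w < L.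
  apply: contra_notP Hnb => H; exists L => y Ey Hy.
  rewrite leNgt; apply/negP => Hl; apply: H; exists y; split => //.
exists w; split => //.
  rewrite ltNge; apply/negP => HGw.
  have := HL w Ew ((inP w).2 (conj Hw HGw)); lra.
move=> y Ey Hy; have := HL y Ey Hy; lra.
Qed.

Lemma lin_aff (R : realType) (V : lmodType R) (f : V -> R)
  (H : forall (a : R) x y, f (a *: x + y) = a * f x + f y) :
  forall u v (t : R), f ((1 - t) *: u + t *: v) = (1 - t) * f u + t * f v.
Proof.
have f0 : f 0 = 0.
  have := H 1 0 0; rewrite scaler0 addr0 mul1r => h.
  lra.
move=> u v t; rewrite H.
have := H t v 0; rewrite addr0 f0 addr0 => ->; done.
Qed.

Theorem mainTheorem10 (R : realType) (X : tvsType R) (ge : X -> X -> Prop)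
  (M : set X) (dimM : nat) (pi : X -> R) (A : set X) :
  hausdorff_space X ->
  first_countable X ->
  vector_partial_order ge ->
  vsubspace M -> has_dim M dimM -> (1 < dimM)%N ->
  linear_on M pi ->
  (* (A1) *)
  (exists U, [/\ M U, pos_cone ge U & pi U = 1]) ->
  (* (A2) *)
  closed A -> A 0 -> A <> setT ->
  (forall x y, A x -> pos_cone ge y -> A (x + y)) ->
  (* (A3) *)
  (forall x, rho M A pi x \is a fin_num) ->
  continuous (fun x => fine (rho M A pi x)) ->
  polyhedral A ->
  forall x : X, optimal_payoffs M A pi x !=set0.
Proof.
move=> _ _ _ [HM0 HM] _ _ Hpi _ _ _ _ _ Hfin _ [k [phi [alpha [Hphi HA]]]] x.
have inA : forall y, A y <-> forall i, alpha i <= phi i y.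
  move=> y; rewrite HA; split => [h i|h i _]; [exact: h|exact: h].
have HE : aff_closed M.
  move=> u v t Mu Mv; apply: (HM) => //.
  by have := HM t v 0 Mv HM0; rewrite addr0.
have pi0 : pi 0 = 0.
  have := Hpi 1 0 0 HM0 HM0; rewrite scaler0 addr0 mul1r => h.
  lra.
have Hf : aff_on M pi.
  move=> u v t Mu Mv; rewrite Hpi //.
    by have := Hpi t v 0 Mv HM0; rewrite addr0 pi0 addr0 => ->.
  by have := HM t v 0 Mv HM0; rewrite addr0.
have Hg : forall i, aff_on M (fun z => phi i (x + z)).
  move=> i u v t _ _.
  have -> : x + ((1 - t) *: u + t *: v) = (1 - t) *: (x + u) + t *: (x + v).
    by rewrite !scalerDr addrACA -scalerDl subrK scale1r.
  by apply: lin_aff; exact: (Hphi i).1.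
pose S := [set z | M z /\ A (x + z)].
have Hne : exists p, M p /\ forall i, alpha i <= phi i (x + p).
  apply: contrapT => Hno.
  have Hset : [set (pi z)%:E | z in S] = set0.
    apply/seteqP; split => e //= [z [Mz Az] _]; apply: Hno.
    by exists z; split => //; apply/inA.
  by have := Hfin x; rewrite /rho -/S Hset ereal_inf0.
have lb : forall y, S y -> (rho M A pi x <= (pi y)%:E)%E.
  by move=> y Sy; apply: ereal_inf_lbound; exists y.
have Hb : exists L, forall y, M y -> (forall i, alpha i <= phi i (x + y)) -> L <= pi y.
  exists (fine (rho M A pi x)) => y My Hy.
  have h := lb y (conj My ((inA _).2 Hy)).
  by rewrite -lee_fin fineK // Hfin.
have [c [[Mc Hc] Hcmin]] := lp_attain HE Hf Hg Hne Hb.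
exists c; split => //; first exact/inA.
apply/le_anti/andP; split; last by apply: lb; split => //; apply/inA.
apply: le_ereal_inf_tmp => e [z [Mz Az] <-].
by rewrite lee_fin; apply: Hcmin => //; apply/inA.
Qed.
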